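(* Let $R$ be a ring, $*\in\{l,r,\emptyset\}$, $S\in\mathbb{L}_*(R,\mathfrak{a})$ and $T\in\mathbb{L}_*(R,\mathfrak{b})$ with $S\subseteq T$. Then $\mathfrak{a}\subseteq\mathfrak{b}$, and for $*\in\{l,\emptyset\}$ the map $S^{-1}R\to T^{-1}R$, $s^{-1}r\mapsto s^{-1}r$ (with $s\in S\subseteq T$) is an $R$-homomorphism with kernel $S^{-1}(\mathfrak{b}/\mathfrak{a})=\overline{S}^{-1}(\mathfrak{b}/\mathfrak{a})$, where $\overline{S}=\{s+\mathfrak{a}:s\in S\}$. The analogous statement (with right fractions $rs^{-1}\mapsto rs^{-1}$) holds for $*=r$.
   Context: Rings are associative with $1$. Multiplicative set: $SS\subseteq S$, $1\in S$, $0\notin S$. $R\langle S^{-1}\rangle=R\langle X_S\rangle/I_S$ ($R\langle X_S\rangle$ freely generated by $R$ and noncommuting $x_s$, $I_S$ generated by $sx_s-1,x_ss-1$); $\mathrm{ass}_R(S)=\ker(R\to R\langle S^{-1}\rangle)$. Left localizable: $R\langle S^{-1}\rangle\ne0$ and every element has the form $s^{-1}r:=(x_s+I_S)(r+I_S)$; right localizable: every element has the form $rs^{-1}:=(r+I_S)(x_s+I_S)$ (and ring nonzero); localizable: both. $\mathbb{L}_*(R,\mathfrak{a})$ is the set of $*$-localizable sets ($*=l$ left, $r$ right, $\emptyset$ two-sided) $S$ with $\mathrm{ass}_R(S)=\mathfrak{a}$. For $*\in\{l,\emptyset\}$, $S^{-1}R$ denotes $R\langle S^{-1}\rangle$; it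 is $R$-isomorphic to the Ore localization $\overline{S}^{-1}(R/\mathfrak{a})$, and $\overline{S}^{-1}(\mathfrak{b}/\mathfrak{a})=\{\overline{s}^{-1}(b+\mathfrak{a}): s\in S,b\in\mathfrak{b}\}$. *)

(* Defs.v *)
From HB Require Import structures.
From mathcomp Require Import all_boot all_algebra.
Set Implicit Arguments. Unset Strict Implicit. Unset Printing Implicit Defensive.
Import GRing.Theory.
Local Open Scope ring_scope.

Definition multiplicative (R : pzRingType) (S : R -> Prop) : Prop :=
  [/\ S 1, ~ S 0 & forall x y, S x -> S y -> S (x * y)].

Definition is_inverse (A : pzRingType) (x u : A) : Prop := u * x = 1 /\ x * u = 1.

Definition inverts (R A : pzRingType) (S : R -> Prop) (phi : {rmorphism R -> A}) :=
  forall s, S s -> exists u, is_inverse (phi s) u.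

(* (A, phi) is the universal localization R<S^{-1}> (characterised up to unique
   isomorphism by its universal property). *)
Definition univ_loc (R A : pzRingType) (S : R -> Prop) (phi : {rmorphism R -> A}) :=
  inverts S phi /\
  forall (C : pzRingType) (g : {rmorphism R -> C}), inverts S g ->
    (exists h : {rmorphism A -> C}, forall r, h (phi r) = g r) /\
    (forall h1 h2 : {rmorphism A -> C},
        (forall r, h1 (phi r) = g r) -> (forall r, h2 (phi r) = g r) -> h1 =1 h2).

Definition lfrac (R A : pzRingType) (phi : {rmorphism R -> A}) (s r : R) (a : A) :=
  exists u, is_inverse (phi s) u /\ a = u * phi r.
Definition rfrac (R A : pzRingType) (phi : {rmorphism R -> A}) (s r : R) (a : A) :=
  exists u, is_inverse (phi s) u /\ a = phi r * u.

Definition ass (R A : pzRingType) (phi : {rmorphism R -> A}) (x : R) : Prop := phi x = 0.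

Inductive side := LeftSide | RightSide | TwoSided.

Definition left_localizable (R A : pzRingType) (S : R -> Prop) (phi : {rmorphism R -> A}) :=
  (1 : A) <> 0 /\ forall a : A, exists s r, S s /\ lfrac phi s r a.
Definition right_localizable (R A : pzRingType) (S : R -> Prop) (phi : {rmorphism R -> A}) :=
  (1 : A) <> 0 /\ forall a : A, exists s r, S s /\ rfrac phi s r a.

Definition localizable (k : side) (R A : pzRingType) (S : R -> Prop)
    (phi : {rmorphism R -> A}) :=
  match k with
  | LeftSide => left_localizable S phi
  | RightSide => right_localizable S phi
  | TwoSided => left_localizable S phi /\ right_localizable S phi
  end.

(* S ∈ L_k(R, a), where (A, phi) is R<S^{-1}> *)
Definition in_L (k : side) (R A : pzRingType) (S : R -> Prop)
    (phi : {rmorphism R -> A}) (a : R -> Prop) :=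
  multiplicative S /\ univ_loc S phi /\ localizable k S phi /\
  (forall x, a x <-> ass phi x).

(* Main.v *)
Require Import Defs.
From HB Require Import structures.
From mathcomp Require Import all_boot all_algebra.
Import GRing.Theory.
Local Open Scope ring_scope.

Theorem lemma1p10 (k : side) (R A B : pzRingType) (S T : R -> Prop)
    (phi : {rmorphism R -> A}) (psi : {rmorphism R -> B}) (a b : R -> Prop) :
  in_L k S phi a -> in_L k T psi b -> (forall x, S x -> T x) ->
  (forall x, a x -> b x) /\
  (k <> RightSide ->
     exists f : {rmorphism A -> B},
       (forall r, f (phi r) = psi r) /\
       (forall s r x, S s -> lfrac phi s r x -> lfrac psi s r (f x)) /\
       (forall x, f x = 0 <-> exists s y, [/\ S s, b y & lfrac phi s y x])) /\
  (k = RightSide ->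
     exists f : {rmorphism A -> B},
       (forall r, f (phi r) = psi r) /\
       (forall s r x, S s -> rfrac phi s r x -> rfrac psi s r (f x)) /\
       (forall x, f x = 0 <-> exists s y, [/\ S s, b y & rfrac phi s y x])).
Proof.
move=> [_ [[invS univS] [locS aE]]] [_ [[invT univT] [_ bE]]] ST.
have invSpsi : inverts S psi.
  by move=> s /ST Ts; exact: invT.
have [[h hE] _] := univS B psi invSpsi.
have hinv : forall s u, is_inverse (phi s) u -> is_inverse (psi s) (h u).
  move=> s u [H1 H2]; split; by rewrite -hE -rmorphM ?H1 ?H2 rmorph1.
have ab : forall x, a x -> b x.
  by move=> x /aE Hx; apply/bE; rewrite /ass -hE Hx rmorph0.
split => //.
split.
- move=> kR.
  have [_ lS] : left_localizable S phi.
    by move: kR locS; case: k => //= _ [].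
  exists h; split => //; split.
    move=> s r x _ [u [Hu ->]]; exists (h u); split; first exact: hinv.
    by rewrite rmorphM hE.
  move=> x; split.
    move=> hx; have [s [r [Ss [u [Hu xE]]]]] := lS x.
    exists s, r; split => //; last by exists u.
    apply/bE; rewrite /ass.
    have [H1 H2] := hinv _ _ Hu.
    by move: hx; rewrite xE rmorphM hE => hx; rewrite -[psi r]mul1r -H2 -mulrA hx mulr0.
  move=> [s [y [Ss By [u [Hu ->]]]]].
  by rewrite rmorphM hE (proj1 (bE y) By) mulr0.
- move=> kR; subst k.
  have [_ lS] := locS.
  exists h; split => //; split.
    move=> s r x _ [u [Hu ->]]; exists (h u); split; first exact: hinv.
    by rewrite rmorphM hE.
  move=> x; split.
    move=> hx; have [s [r [Ss [u [Hu xE]]]]] := lS x.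
    exists s, r; split => //; last by exists u.
    apply/bE; rewrite /ass.
    have [H1 H2] := hinv _ _ Hu.
    by move: hx; rewrite xE rmorphM hE => hx; rewrite -[psi r]mulr1 -H1 mulrA hx mul0r.
  move=> [s [y [Ss By [u [Hu ->]]]]].
  by rewrite rmorphM hE (proj1 (bE y) By) mul0r.
Qed.
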